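(* Let $0<\alpha<1$ and $x_A>0$. For a point $(x,y)$ with $x>0$ and $(x,y)\neq(x_A,0)$, consider the Apollonius circle of the Target position $T=(x,y)$ and the Attacker position $A=(x_A,0)$ with ratio $\alpha$, i.e. the circle with center abscissa $x_O=\frac{x-\alpha^2x_A}{1-\alpha^2}$ and radius $r=\frac{\alpha}{1-\alpha^2}\sqrt{(x_A-x)^2+y^2}$. Let $R_e$ be the set of such points $(x,y)$, $x>0$, for which this circle crosses the $y$-axis, i.e. $x_O<r$ (equivalently $x-\alpha^2x_A<\alpha\sqrt{(x_A-x)^2+y^2}$), and let $R_{e_o}$ be the set of remaining points with $x>0$. Then $$R_e=\Big\{(x,y):\ x>0,\ \frac{x^2}{\alpha^2x_A^2}-\frac{y^2}{(1-\alpha^2)x_A^2}<1\Big\},$$ so that the curve separating $R_e$ from $R_{e_o}$ is the right branch ($x>0$) of the hyperbola $$\frac{x^2}{\alpha^2x_A^2}-\frac{y^2}{(1-\alpha^2)x_A^2}=1.$$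
   Context: Setting (reduced state space of the active target defense game): the Attacker starts at $(x_A,0)$ and the Defender at $(-x_A,0)$, $x_A>0$, both with the same constant speed $V_A=V_D$; the Target starts at $(x,y)$ with $x>0$ and has constant speed $V_T$; $\alpha=V_T/V_A\in(0,1)$. The Apollonius circle of $T$ and $A$ with ratio $\alpha$ is the set of points $P$ with $|PT|=\alpha|PA|$. $R_e$ is the escape region: initial Target positions from which the Target can reach the $y$-axis (where the Defender can intercept the Attacker) before the Attacker reaches it, characterized by the Apollonius circle crossing the $y$-axis. *)

(* Defs.v *)
From mathcomp Require Import all_boot all_order all_algebra.
From mathcomp Require Import reals.
Set Implicit Arguments. Unset Strict Implicit. Unset Printing Implicit Defensive.
Import Order.TTheory GRing.Theory Num.Theory.
Local Open Scope ring_scope.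

Definition apollo_xO {R : realType} (alpha xA x : R) : R :=
  (x - alpha ^+ 2 * xA) / (1 - alpha ^+ 2).

Definition apollo_r {R : realType} (alpha xA x y : R) : R :=
  alpha / (1 - alpha ^+ 2) * Num.sqrt ((xA - x) ^+ 2 + y ^+ 2).

Definition escape_region {R : realType} (alpha xA : R) (p : R * R) : Prop :=
  0 < p.1 /\ p <> (xA, 0) /\ apollo_xO alpha xA p.1 < apollo_r alpha xA p.1 p.2.

Definition Reo {R : realType} (alpha xA : R) (p : R * R) : Prop :=
  0 < p.1 /\ ~ escape_region alpha xA p.

Definition hyp_region {R : realType} (alpha xA : R) (p : R * R) : Prop :=
  0 < p.1 /\
  p.1 ^+ 2 / (alpha ^+ 2 * xA ^+ 2) - p.2 ^+ 2 / ((1 - alpha ^+ 2) * xA ^+ 2) < 1.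

(* Main.v *)
Require Import Defs.
From mathcomp Require Import all_boot all_order all_algebra.
From mathcomp Require Import reals.
From mathcomp Require Import ring lra.
Import Order.TTheory GRing.Theory Num.Theory.
Local Open Scope ring_scope.

Theorem proposition4 (R : realType) (alpha xA : R) :
  0 < alpha -> alpha < 1 -> 0 < xA ->
  forall p : R * R, escape_region alpha xA p <-> hyp_region alpha xA p.
Proof.
move=> a0 a1 xA0 [x y].
rewrite /escape_region /hyp_region /apollo_xO /apollo_r /=.
set s := Num.sqrt _.
have s0 : 0 <= s by apply: sqrtr_ge0.
have s2 : s ^+ 2 = (xA - x) ^+ 2 + y ^+ 2.
  by rewrite sqr_sqrtr // addr_ge0 // sqr_ge0.
have k0 : 0 < 1 - alpha ^+ 2 by rewrite subr_gt0 expr2; nra.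
have E1 : ((x - alpha ^+ 2 * xA) / (1 - alpha ^+ 2) <
           alpha / (1 - alpha ^+ 2) * s) = (x - alpha ^+ 2 * xA < alpha * s).
  by rewrite [alpha / _ * s]mulrAC ltr_pM2r ?invr_gt0.
have hk : 0 < alpha ^+ 2 * (1 - alpha ^+ 2) * xA ^+ 2.
  by rewrite !mulr_gt0 // exprn_gt0.
have E2 : x ^+ 2 / (alpha ^+ 2 * xA ^+ 2) - y ^+ 2 / ((1 - alpha ^+ 2) * xA ^+ 2)
   = ((1 - alpha ^+ 2) * x ^+ 2 - alpha ^+ 2 * y ^+ 2) /
     (alpha ^+ 2 * (1 - alpha ^+ 2) * xA ^+ 2).
  by field; rewrite ?mulf_neq0 ?expf_neq0 ?gt_eqF ?lt0r_neq0.
rewrite E1 E2 ltr_pdivrMr // mul1r.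
split.
- move=> [x0 [_ H]]; split => //.
  case: (ltrP (x - alpha ^+ 2 * xA) 0) => hd.
    have : x < alpha ^+ 2 * xA by lra.
    move=> hx.
    have ha2 : alpha ^+ 2 < 1 by lra.
    have hb0 : 0 < alpha ^+ 2 by rewrite exprn_gt0.
    move: hx ha2 hb0 k0; set b := alpha ^+ 2 => hx ha2 hb0 k0.
    have h1 : x ^+ 2 < (b * xA) ^+ 2 by rewrite ltr_pXn2r ?nnegrE //; nra.
    have h2 : (b * xA) ^+ 2 <= b * xA ^+ 2.
      rewrite exprMn expr2 -mulrA ler_pM2l //; rewrite -[X in _ <= X]mul1r.
      by rewrite ler_pM2r ?exprn_gt0 // ltW.
    have h3 : (1 - b) * x ^+ 2 < (1 - b) * (b * xA ^+ 2).
      by rewrite ltr_pM2l //; lra.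
    have h4 : 0 <= b * y ^+ 2 by rewrite mulr_ge0 ?sqr_ge0 // ltW.
    have -> : b * (1 - b) * xA ^+ 2 = (1 - b) * (b * xA ^+ 2) by ring.
    lra.
  have : (x - alpha ^+ 2 * xA) ^+ 2 < (alpha * s) ^+ 2.
    by rewrite ltr_pXn2r ?nnegrE //; nra.
  rewrite exprMn s2 => h.
  rewrite !expr2 in h k0 hk *.
  nra.
- move=> [x0 H]; split => //; split.
    case=> ex ey; rewrite ex ey in H.
    rewrite !expr2 in H k0 hk a1 *.
    nra.
  case: (ltrP (x - alpha ^+ 2 * xA) 0) => hd.
    have : 0 <= alpha * s by rewrite mulr_ge0 // ltW.
    lra.
  rewrite ltNge; apply/negP => hle.
  have : (alpha * s) ^+ 2 <= (x - alpha ^+ 2 * xA) ^+ 2.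
    by rewrite ler_pXn2r ?nnegrE // mulr_ge0 // ltW.
  rewrite exprMn s2 => h.
  rewrite !expr2 in h H *.
  nra.
Qed.
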